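(* Let $\mathcal T=(\mathcal S,\to)$ be an LTS over $\Sigma$, $\mathcal V$ a valuation, $Z\in\mathrm{Var}$, $\sigma\in\{\mu,\nu\}$, and $\Phi$ a fixpoint-free formula in positive normal form such that $\sigma Z.\Phi$ is well-formed, and let $S=[\![\sigma Z.\Phi]\!]_{\mathcal V}$. Then $S\vdash^{\mathcal T}_{\mathcal V,\varepsilon}\sigma Z.\Phi$ ($\varepsilon$ the empty definition list) has a successful tableau.
   Context: Fix a set $\Sigma$ and a countably infinite set $\mathrm{Var}$ of variables. An LTS is $\mathcal T=(\mathcal S,\to)$ with ${\to}\subseteq\mathcal S\times\Sigma\times\mathcal S$; $s\xrightarrow{K}s'$ means $s\xrightarrow{a}s'$ for some $a\in K$. A valuation is $\mathcal V:\mathrm{Var}\to 2^{\mathcal S}$. Formulas: $\Phi::=Z\mid\neg\Phi\mid\Phi_1\wedge\Phi_2\mid[K]\Phi\mid\nu Z.\Phi$, well-formed if in each $\nu Z.\Phi$ every free occurrence of $Z$ in $\Phi$ is under an even number of negations. Derived: $\vee$, $\langle K\rangle\Phi=\neg[K]\neg\Phi$, $\mu Z.\Phi=\neg\nu Z.\neg\Phi[Z:=\neg Z]$. Semantics: $[\![Z]\!]_{\mathcal V}=\mathcal V(Z)$, negation = complement, $\wedge$ = intersection, $[\![[K]\Phi]\!]_{\mathcal V}=\{s\mid\forall s'.\ s\xrightarrow{K}s'\Rightarrow s'\in[\![\Phi]\!]_{\mathcal V}\}$, $[\![\nu Z.\Phi]\!]_{\mathcal V}=\bigcup\{S'\mid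 S'\subseteq[\![\Phi]\!]_{\mathcal V[Z:=S']}\}$ (so $[\![\mu Z.\Phi]\!]$ is the least fixpoint). Positive normal form: built from $Z,\neg Z,\wedge,\vee,[K],\langle K\rangle,\nu,\mu$. Fixpoint-free: no subformula $\nu Z.\Psi$ or $\mu Z.\Psi$. Definition list $\Delta=(U_1=\Phi_1)\cdots(U_n=\Phi_n)$: distinct $U_i$, no $U_i$ bound in any $\Phi_j$, $U_j$ not free in $\Phi_i$ for $i\le j$; $\Delta(U_i)=\Phi_i$. Sequent $S\vdash^{\mathcal T}_{\mathcal V,\Delta}\Phi$: $S\subseteq\mathcal S$, $\Phi$ in positive normal form, every $U\in\mathrm{dom}(\Delta)$ positive and not bound in $\Phi$. Rules (conclusion; premises): ($\wedge$) $S\vdash_\Delta\Phi_1\wedge\Phi_2$; $S\vdash_\Delta\Phi_1$, $S\vdash_\Delta\Phi_2$. ($\vee$) $S\vdash_\Delta\Phi_1\vee\Phi_2$; $S_1\vdash_\Delta\Phi_1$, $S_2\vdash_\Delta\Phi_2$, $S=S_1\cup S_2$. ($[K]$) $S\vdash_\Delta[K]\Phi$; $\{s'\mid\exists s\in S.\ s\xrightarrow{K}s'\}\vdash_\Delta\Phi$. ($\langle K\rangle$, witness $f:S\to\mathcal S$, $s\xrightarrow{K}f(s)$) $S\vdash_\Delta\langle K\rangle\Phi$; $f(S)\vdash_\Delta\Phi$. ($\sigma Z$) $S\vdash_\Delta\sigma Z.\Phi$; $S\vdash_{\Delta\cdot(U=\sigma Z.\Phi)}U$, $U$ fresh. (Un)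 $S\vdash_\Delta U$; $S\vdash_\Delta\Phi[Z:=U]$, $\Delta(U)=\sigma Z.\Phi$. (Thin) $S\vdash_\Delta\Phi$; $S'\vdash_\Delta\Phi$, $S\subseteq S'$. A tableau is a finite nonempty ordered tree of nodes labelled by sequents over $\mathcal T,\mathcal V$, each internal node labelled by a rule application (plus witness function for $\langle K\rangle$) forming a rule instance with its ordered children, whose root has empty definition list and whose leaves $n$ (sequent $S_n\vdash_\Delta\Phi$) are terminal: (a) $\Phi\in\{Z,\neg Z\}$, $Z\notin\mathrm{dom}(\Delta)$; (b) $\Phi=\langle K\rangle\Psi$ and some $s\in S_n$ has no $K$-successor; (c) $\Phi=U\in\mathrm{dom}(\Delta)$ and some strict ancestor $m$ has formula $U$ with $S_n\subseteq S_m$ ($\mu$-/$\nu$-leaf according to $\Delta(U)$). Companion nodes: nodes with rule Un; companion leaves of $m$: leaves strictly below $m$ with the same formula and $S_n\subseteq S_m$, excluding companion leaves of companion nodes strictly below $m$. For a child $n'$ of $n$: $s'<_{n',n}s$ iff $s'\in S_{n'}$, $s\in S_n$ and (rule $[K]$, $s\xrightarrow{K}s'$) or (rule $(\langle K\rangle,f)$, $s'=f(s)$) or (other rule, $s'=s$). $\lessdot_{n',n}$ is least with $s\lessdot_{n,n}s$ and ($s'\lessdot_{n',m}s''$, $s''<_{m,n}s$)$\Rightarrow s'\lessdot_{n',n}s$. $<:_{n',n}$, $<:_m$ are least with: $s'<:_m s$ iff some companion leaf $m'$ of $m$ has $s'\in S_{m'}$, $s'<:_{m',m}s$; $s'<:_{n',n}s$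 iff $s'\in S_{n'}$, $s\in S_n$, and $s'\lessdot_{n',n}s$ or some companion node $m\notin\{n,n'\}$ and $t,t'\in S_m$ satisfy $s'<:_{n',m}t'$, $t'(<:_m)^+t$, $t\lessdot_{m,n}s$. A leaf is successful iff: formula $Z$ and $S_n\subseteq\mathcal V(Z)$; or $\neg Z$ and $S_n\cap\mathcal V(Z)=\emptyset$; or $\nu$-leaf; or $\mu$-leaf whose companion node $m$ has $<:_m$ well-founded. A tableau is successful iff all its leaves are successful. *)

(* Defs.v *)
From Stdlib Require Import List Arith Relations.
Import ListNotations.
Set Implicit Arguments.

Definition var := nat.

(* Formulas.  The derived connectives (or, diamond, mu) are included as
   constructors; their semantics below is exactly the semantics of their
   defining abbreviations. *)
Inductive form (A : Type) : Type :=
| FVar : var -> form A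
| FNeg : form A -> form A
| FAnd : form A -> form A -> form A
| FOr  : form A -> form A -> form A
| FBox : (A -> Prop) -> form A -> form A
| FDia : (A -> Prop) -> form A -> form A
| FNu  : var -> form A -> form A
| FMu  : var -> form A -> form A.
Arguments FVar {A}.

Definition step {St A : Type} (tr : St -> A -> St -> Prop) (K : A -> Prop) (s s' : St) : Prop :=
  exists a, K a /\ tr s a s'.

Definition upd {St : Type} (V : var -> St -> Prop) (Z : var) (S : St -> Prop) : var -> St -> Prop :=
  fun X => if Nat.eqb X Z then S else V X.

Fixpoint sem {St A : Type} (tr : St -> A -> St -> Prop) (V : var -> St -> Prop) (f : form A)
  : St -> Prop :=
  match f with
  | FVar X => V X
  | FNeg g => fun s => ~ sem tr V g s
  | FAnd g h => fun s => sem tr V g s /\ sem tr V h s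
  | FOr g h => fun s => sem tr V g s \/ sem tr V h s
  | FBox K g => fun s => forall s', step tr K s s' -> sem tr V g s'
  | FDia K g => fun s => exists s', step tr K s s' /\ sem tr V g s'
  | FNu Z g => fun s => exists S' : St -> Prop,
                 (forall x, S' x -> sem tr (upd V Z S') g x) /\ S' s
  | FMu Z g => fun s => forall S' : St -> Prop,
                 (forall x, sem tr (upd V Z S') g x -> S' x) -> S' s
  end.

Fixpoint free_in {A} (X : var) (f : form A) : Prop :=
  match f with
  | FVar Y => Y = X
  | FNeg g => free_in X g
  | FAnd g h | FOr g h => free_in X g \/ free_in X h
  | FBox _ g | FDia _ g => free_in X g
  | FNu Y g | FMu Y g => Y <> X /\ free_in X g
  end.

Fixpoint bound_in {A} (X : var) (f : form A) : Prop :=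
  match f with
  | FVar _ => False
  | FNeg g => bound_in X g
  | FAnd g h | FOr g h => bound_in X g \/ bound_in X h
  | FBox _ g | FDia _ g => bound_in X g
  | FNu Y g | FMu Y g => Y = X \/ bound_in X g
  end.

Fixpoint occurs_in {A} (X : var) (f : form A) : Prop :=
  match f with
  | FVar Y => Y = X
  | FNeg g => occurs_in X g
  | FAnd g h | FOr g h => occurs_in X g \/ occurs_in X h
  | FBox _ g | FDia _ g => occurs_in X g
  | FNu Y g | FMu Y g => Y = X \/ occurs_in X g
  end.

(* For the derived
   connectives the count is that of their unfolding (mu Z.g = ~nu Z.~g[Z:=~Z]
   adds two negations above every other variable; or/diamond add none on net). *)
Fixpoint par {A} (Z : var) (b : bool) (f : form A) : Prop :=
  match f with
  | FVar Y => Y = Z -> b = true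
  | FNeg g => par Z (negb b) g
  | FAnd g h | FOr g h => par Z b g /\ par Z b h
  | FBox _ g | FDia _ g => par Z b g
  | FNu Y g | FMu Y g => Y = Z \/ par Z b g
  end.

Definition positive {A} (Z : var) (f : form A) : Prop := par Z true f.

Fixpoint wellformed {A} (f : form A) : Prop :=
  match f with
  | FVar _ => True
  | FNeg g => wellformed g
  | FAnd g h | FOr g h => wellformed g /\ wellformed h
  | FBox _ g | FDia _ g => wellformed g
  | FNu Z g | FMu Z g => par Z true g /\ wellformed g
  end.

Fixpoint pnf {A} (f : form A) : Prop :=
  match f with
  | FVar _ => True
  | FNeg g => exists X, g = FVar X
  | FAnd g h | FOr g h => pnf g /\ pnf h
  | FBox _ g | FDia _ g => pnf g
  | FNu _ g | FMu _ g => pnf g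
  end.

Fixpoint fixpoint_free {A} (f : form A) : Prop :=
  match f with
  | FVar _ => True
  | FNeg g => fixpoint_free g
  | FAnd g h | FOr g h => fixpoint_free g /\ fixpoint_free h
  | FBox _ g | FDia _ g => fixpoint_free g
  | FNu _ _ | FMu _ _ => False
  end.

Fixpoint subst {A} (Z U : var) (f : form A) : form A :=
  match f with
  | FVar Y => if Nat.eqb Y Z then FVar U else FVar Y
  | FNeg g => FNeg (subst Z U g)
  | FAnd g h => FAnd (subst Z U g) (subst Z U h)
  | FOr g h => FOr (subst Z U g) (subst Z U h)
  | FBox K g => FBox K (subst Z U g)
  | FDia K g => FDia K (subst Z U g)
  | FNu Y g => if Nat.eqb Y Z then FNu Y g else FNu Y (subst Z U g)
  | FMu Y g => if Nat.eqb Y Z then FMu Y g else FMu Y (subst Z U g)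
  end.

Definition deflist (A : Type) := list (var * form A).

Definition dom {A} (D : deflist A) (U : var) : Prop := In U (map fst D).

Fixpoint lookup {A} (D : deflist A) (U : var) : option (form A) :=
  match D with
  | [] => None
  | (V, f) :: D' => if Nat.eqb V U then Some f else lookup D' U
  end.

Definition is_deflist {A} (D : deflist A) : Prop :=
  NoDup (map fst D) /\
  (forall U f, dom D U -> In f (map snd D) -> ~ bound_in U f) /\
  (forall i j Ui fi Uj fj, nth_error D i = Some (Ui, fi) -> nth_error D j = Some (Uj, fj) ->
     i <= j -> ~ free_in Uj fi).

Record sequent (St A : Type) : Type := Seq {
  sset  : St -> Prop;
  sdefs : deflist A;
  sform : form A }.

Definition is_sequent {St A} (s : sequent St A) : Prop :=
  is_deflist (sdefs s) /\ pnf (sform s) /\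
  (forall U, dom (sdefs s) U -> positive U (sform s) /\ ~ bound_in U (sform s)).

Definition seteq {St} (S T : St -> Prop) : Prop := forall x, S x <-> T x.
Definition subset {St} (S T : St -> Prop) : Prop := forall x, S x -> T x.

Inductive rule_app (St : Type) : Type :=
| RAnd | ROr | RBox | RDia (f : St -> St) | RFix | RUn | RThin.
Arguments RAnd {St}. Arguments ROr {St}. Arguments RBox {St}.
Arguments RFix {St}. Arguments RUn {St}. Arguments RThin {St}.

Definition fresh {St A} (U : var) (c : sequent St A) : Prop :=
  ~ dom (sdefs c) U /\ ~ occurs_in U (sform c) /\
  (forall f, In f (map snd (sdefs c)) -> ~ occurs_in U f).

Definition rule_ok {St A} (tr : St -> A -> St -> Prop) (r : rule_app St)
  (c : sequent St A) (ps : list (sequent St A)) : Prop :=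
  match r, ps with
  | RAnd, [p1; p2] =>
      sform c = FAnd (sform p1) (sform p2) /\ sdefs p1 = sdefs c /\ sdefs p2 = sdefs c /\
      seteq (sset p1) (sset c) /\ seteq (sset p2) (sset c)
  | ROr, [p1; p2] =>
      sform c = FOr (sform p1) (sform p2) /\ sdefs p1 = sdefs c /\ sdefs p2 = sdefs c /\
      seteq (sset c) (fun x => sset p1 x \/ sset p2 x)
  | RBox, [p] =>
      (exists K, sform c = FBox K (sform p) /\
        seteq (sset p) (fun y => exists x, sset c x /\ step tr K x y)) /\
      sdefs p = sdefs c
  | RDia f, [p] =>
      (exists K, sform c = FDia K (sform p) /\
        (forall x, sset c x -> step tr K x (f x))) /\
      seteq (sset p) (fun y => exists x, sset c x /\ y = f x) /\
      sdefs p = sdefs c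
  | RFix, [p] =>
      (exists Z g, sform c = FNu Z g \/ sform c = FMu Z g) /\
      (exists U, fresh U c /\ sdefs p = sdefs c ++ [(U, sform c)] /\ sform p = FVar U) /\
      seteq (sset p) (sset c)
  | RUn, [p] =>
      (exists U Z g, sform c = FVar U /\
        (lookup (sdefs c) U = Some (FNu Z g) \/ lookup (sdefs c) U = Some (FMu Z g)) /\
        sform p = subst Z U g) /\
      sdefs p = sdefs c /\ seteq (sset p) (sset c)
  | RThin, [p] =>
      sform p = sform c /\ sdefs p = sdefs c /\ subset (sset c) (sset p)
  | _, _ => False
  end.

Inductive tree (St A : Type) : Type :=
| Node : sequent St A -> option (rule_app St) -> list (tree St A) -> tree St A.

Definition label {St A} (t : tree St A) : sequent St A :=
  match t with Node s _ _ => s end.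

Definition addr := list nat.

Fixpoint subtree {St A} (t : tree St A) (p : addr) : option (tree St A) :=
  match p with
  | [] => Some t
  | i :: q => match t with
              | Node _ _ ch => match nth_error ch i with
                               | Some t' => subtree t' q
                               | None => None
                               end
              end
  end.

Definition is_node {St A} (t : tree St A) (p : addr) : Prop := subtree t p <> None.

Definition seq_at {St A} (t : tree St A) (p : addr) (s : sequent St A) : Prop :=
  exists r ch, subtree t p = Some (Node s r ch).

Definition rule_at {St A} (t : tree St A) (p : addr) (r : rule_app St) : Prop :=
  exists s ch, subtree t p = Some (Node s (Some r) ch).

Definition is_leaf {St A} (t : tree St A) (p : addr) : Prop :=
  exists s r, subtree t p = Some (Node s r []).

Definition inS {St A} (t : tree St A) (p : addr) (x : St) : Prop :=
  exists s, seq_at t p s /\ sset s x.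

Definition strict_anc (q p : addr) : Prop := exists r, r <> [] /\ p = q ++ r.

Definition terminal {St A} (tr : St -> A -> St -> Prop) (t : tree St A) (p : addr)
  (s : sequent St A) : Prop :=
  (exists Z, (sform s = FVar Z \/ sform s = FNeg (FVar Z)) /\ ~ dom (sdefs s) Z) \/
  (exists K g, sform s = FDia K g /\ exists x, sset s x /\ ~ exists y, step tr K x y) \/
  (exists U, sform s = FVar U /\ dom (sdefs s) U /\
     exists q sq, strict_anc q p /\ seq_at t q sq /\ sform sq = FVar U /\
                  subset (sset s) (sset sq)).

Definition node_ok {St A} (tr : St -> A -> St -> Prop) (t : tree St A) (p : addr) : Prop :=
  forall s r ch, subtree t p = Some (Node s r ch) ->
    is_sequent s /\
    match ch with
    | [] => r = None /\ terminal tr t p s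
    | _ => exists ra, r = Some ra /\ rule_ok tr ra s (map label ch)
    end.

Definition is_tableau {St A} (tr : St -> A -> St -> Prop) (t : tree St A) : Prop :=
  sdefs (label t) = [] /\ forall p, is_node t p -> node_ok tr t p.

Definition companion_node {St A} (t : tree St A) (m : addr) : Prop := rule_at t m RUn.

Definition cl_cond {St A} (t : tree St A) (m n : addr) : Prop :=
  is_leaf t n /\ strict_anc m n /\
  exists sm sn, seq_at t m sm /\ seq_at t n sn /\ sform sn = sform sm /\
                subset (sset sn) (sset sm).

(* companion leaves, by recursion on a fuel bound; fuel = length n suffices since
   each recursive call moves m strictly down towards n *)
Fixpoint cl_fuel {St A} (k : nat) (t : tree St A) (m n : addr) : Prop :=
  match k with
  | 0 => False
  | S k' => cl_cond t m n /\
            ~ (exists m', companion_node t m' /\ strict_anc m m' /\ cl_fuel k' t m' n)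
  end.

Definition companion_leaf {St A} (t : tree St A) (m n : addr) : Prop :=
  cl_fuel (length n) t m n.

Definition lt_child {St A} (tr : St -> A -> St -> Prop) (t : tree St A) (n' n : addr)
  (s' s : St) : Prop :=
  (exists i, n' = n ++ [i]) /\ is_node t n' /\ inS t n' s' /\ inS t n s /\
  ((rule_at t n RBox /\ exists sn K g, seq_at t n sn /\ sform sn = FBox K g /\ step tr K s s') \/
   (exists f, rule_at t n (RDia f) /\ s' = f s) \/
   (~ rule_at t n RBox /\ ~ (exists f, rule_at t n (RDia f)) /\ s' = s)).

Inductive lessdot {St A} (tr : St -> A -> St -> Prop) (t : tree St A)
  : addr -> addr -> St -> St -> Prop :=
| ld_refl : forall n s, is_node t n -> lessdot tr t n n s s
| ld_step : forall n' m n s' s'' s,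
    lessdot tr t n' m s' s'' -> lt_child tr t m n s'' s -> lessdot tr t n' n s' s.

Inductive subm {St A} (tr : St -> A -> St -> Prop) (t : tree St A)
  : addr -> St -> St -> Prop :=
| subm_intro : forall m m' s' s,
    companion_leaf t m m' -> inS t m' s' -> subnn tr t m' m s' s -> subm tr t m s' s
with subnn {St A} (tr : St -> A -> St -> Prop) (t : tree St A)
  : addr -> addr -> St -> St -> Prop :=
| subnn_ld : forall n' n s' s,
    inS t n' s' -> inS t n s -> lessdot tr t n' n s' s -> subnn tr t n' n s' s
| subnn_comp : forall n' n s' s m u u',
    inS t n' s' -> inS t n s ->
    companion_node t m -> m <> n -> m <> n' ->
    inS t m u -> inS t m u' ->
    subnn tr t n' m s' u' -> subm_plus tr t m u' u -> lessdot tr t m n u s ->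
    subnn tr t n' n s' s
with subm_plus {St A} (tr : St -> A -> St -> Prop) (t : tree St A)
  : addr -> St -> St -> Prop :=
| smp_one : forall m x y, subm tr t m x y -> subm_plus tr t m x y
| smp_trans : forall m x y z, subm_plus tr t m x y -> subm_plus tr t m y z ->
    subm_plus tr t m x z.

Definition leaf_successful {St A} (tr : St -> A -> St -> Prop) (V : var -> St -> Prop)
  (t : tree St A) (n : addr) : Prop :=
  exists s, seq_at t n s /\
  ( (exists Z, sform s = FVar Z /\ ~ dom (sdefs s) Z /\ subset (sset s) (V Z)) \/
    (exists Z, sform s = FNeg (FVar Z) /\ ~ dom (sdefs s) Z /\
               forall x, sset s x -> ~ V Z x) \/
    (exists U Z g, sform s = FVar U /\ lookup (sdefs s) U = Some (FNu Z g)) \/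
    (exists U Z g, sform s = FVar U /\ lookup (sdefs s) U = Some (FMu Z g) /\
       exists m, companion_node t m /\ companion_leaf t m n /\
                 well_founded (subm tr t m)) ).

Definition successful {St A} (tr : St -> A -> St -> Prop) (V : var -> St -> Prop)
  (t : tree St A) : Prop :=
  forall n, is_leaf t n -> leaf_successful tr V t n.

(* Main.v *)
Require Import Defs.
From Stdlib Require Import List Arith Lia Classical ClassicalEpsilon.
Import ListNotations.

Section Basic.
Context {St A : Type} (tr : St -> A -> St -> Prop).

Lemma upd_eq (V : var -> St -> Prop) X P : upd V X P X = P.
Proof. unfold upd. now rewrite Nat.eqb_refl. Qed.
Lemma upd_neq (V : var -> St -> Prop) X Y P : Y <> X -> upd V X P Y = V Y.
Proof. intros H. unfold upd. apply Nat.eqb_neq in H. now rewrite H. Qed.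

Lemma sem_mono : forall (h : form A) V X P Q, fixpoint_free h -> pnf h -> par X true h ->
  subset P Q -> subset (sem tr (upd V X P) h) (sem tr (upd V X Q) h).
Proof.
  induction h; simpl; intros V' X P0 Q0 Hf Hp Hpar HPQ x Hx.
  - destruct (Nat.eq_dec v X) as [->|Hne].
    + rewrite upd_eq in *. auto.
    + rewrite upd_neq in * by auto. auto.
  - destruct Hp as [Y ->]. simpl in *. intro Hc. apply Hx.
    assert (Y <> X) by (intro E; specialize (Hpar E); discriminate).
    rewrite upd_neq in Hc by auto. rewrite upd_neq by auto. auto.


  - destruct Hf, Hp, Hpar, Hx. split; [eapply IHh1|eapply IHh2]; eauto.
  - destruct Hf, Hp, Hpar. destruct Hx; [left; eapply IHh1|right; eapply IHh2]; eauto.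
  - intros s' Hs. eapply IHh; eauto.
  - destruct Hx as [s0 [Hs Hs0]]. exists s0; split; [auto| eapply IHh; eauto].
  - contradiction.
  - contradiction.
Qed.

Lemma subst_sem : forall (g : form A) V Z U P x, fixpoint_free g -> ~ occurs_in U g ->
  (sem tr (upd V U P) (subst Z U g) x <-> sem tr (upd V Z P) g x).
Proof.
  induction g; simpl; intros V' Z U P0 x Hf Ho.
  - destruct (Nat.eqb v Z) eqn:E.
    + apply Nat.eqb_eq in E; subst. simpl. rewrite !upd_eq. tauto.
    + apply Nat.eqb_neq in E. simpl. rewrite upd_neq by auto. rewrite upd_neq by auto. tauto.
  - specialize (IHg V' Z U P0 x Hf Ho). tauto.
  - destruct Hf as [H1 H2].
    specialize (IHg1 V' Z U P0 x H1 (fun h => Ho (or_introl h))).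
    specialize (IHg2 V' Z U P0 x H2 (fun h => Ho (or_intror h))). tauto.
  - destruct Hf as [H1 H2].
    specialize (IHg1 V' Z U P0 x H1 (fun h => Ho (or_introl h))).
    specialize (IHg2 V' Z U P0 x H2 (fun h => Ho (or_intror h))). tauto.
  - split; intros H s' Hs; apply (IHg V' Z U P0 s' Hf Ho); auto.
  - split; intros [s' [Hs H]]; exists s'; split; auto; apply (IHg V' Z U P0 s' Hf Ho); auto.
  - contradiction.
  - contradiction.
Qed.

Lemma bound_occ : forall (f : form A) X, bound_in X f -> occurs_in X f.
Proof. induction f; simpl; intuition. Qed.
Lemma free_occ : forall (f : form A) X, free_in X f -> occurs_in X f.
Proof. induction f; simpl; intuition. Qed.
Lemma ff_nobound : forall (f : form A) X, fixpoint_free f -> ~ bound_in X f.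
Proof. induction f; simpl; intuition eauto. Qed.

Lemma subst_ff : forall (g : form A) Z U, fixpoint_free g -> fixpoint_free (subst Z U g).
Proof. induction g; simpl; intros; intuition; destruct (Nat.eqb v Z); simpl; auto. Qed.

Lemma subst_pnf : forall (g : form A) Z U, fixpoint_free g -> pnf g -> pnf (subst Z U g).
Proof.
  induction g; simpl; intros Z U Hf Hp; intuition.
  - destruct (Nat.eqb v Z); simpl; auto.
  - destruct Hp as [X ->]. simpl. destruct (Nat.eqb X Z); eauto.
Qed.

Lemma subst_par : forall (g : form A) Z U b, fixpoint_free g -> ~ occurs_in U g ->
  par Z b g -> par U b (subst Z U g).
Proof.
  induction g; simpl; intros Z U b Hf Ho Hp.
  - destruct (Nat.eqb v Z) eqn:E; simpl.
    + apply Nat.eqb_eq in E. auto.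
    + intro E'. contradiction.
  - apply IHg; auto.
  - intuition.
  - intuition.
  - apply IHg; auto.
  - apply IHg; auto.
  - contradiction.
  - contradiction.
Qed.

Fixpoint maxv (f : form A) : nat :=
  match f with
  | FVar X => X
  | FNeg g => maxv g
  | FAnd g h | FOr g h => max (maxv g) (maxv h)
  | FBox _ g | FDia _ g => maxv g
  | FNu Y g | FMu Y g => max Y (maxv g)
  end.

Lemma occ_maxv : forall (f : form A) X, occurs_in X f -> X <= maxv f.
Proof.
  induction f; simpl; intros X H.
  - subst; lia.
  - auto.
  - destruct H as [H|H]; [apply IHf1 in H|apply IHf2 in H]; lia.
  - destruct H as [H|H]; [apply IHf1 in H|apply IHf2 in H]; lia.
  - auto.
  - auto.
  - destruct H as [H|H]; [subst; lia|apply IHf in H; lia].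
  - destruct H as [H|H]; [subst; lia|apply IHf in H; lia].
Qed.

End Basic.

Section Approx.
Variable St : Type.
Variable F : (St -> Prop) -> (St -> Prop).
Hypothesis Fmono : forall P Q, subset P Q -> subset (F P) (F Q).

Inductive approx : (St -> Prop) -> Prop :=
| apF : forall P, approx P -> approx (F P)
| apU : forall (C : (St -> Prop) -> Prop), (forall P, C P -> approx P) ->
          approx (fun x => exists P, C P /\ P x)
| apE : forall P Q, approx P -> (forall x, P x <-> Q x) -> approx Q.

Definition ssub (P Q : St -> Prop) := subset P Q /\ ~ subset Q P.
Definition normal P := forall Q, approx Q -> ssub Q P -> subset (F Q) P.

Lemma approx_infl : forall P, approx P -> subset P (F P).
Proof.
  induction 1; intros x Hx.
  - eapply Fmono; [exact IHapprox| exact Hx].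
  - destruct Hx as [P [HC HP]]. eapply Fmono; [| apply (H0 P HC x HP)].
    intros y Hy; exists P; auto.
  - apply H0 in Hx. apply IHapprox in Hx. eapply Fmono; [|exact Hx].
    intros y Hy; apply H0; auto.
Qed.

Lemma approx_below : forall Pre, subset (F Pre) Pre -> forall P, approx P -> subset P Pre.
Proof.
  intros Pre HPre. induction 1; intros x Hx.
  - apply HPre. eapply Fmono; eauto.
  - destruct Hx as [P [HC HP]]. eapply H0; eauto.
  - apply IHapprox, H0, Hx.
Qed.

Lemma lem1 : forall P, normal P -> forall Q, approx Q -> subset Q P \/ subset (F P) Q.
Proof.
  intros P HP. induction 1.
  - destruct IHapprox as [H1|H1].
    + destruct (classic (subset P P0)) as [H2|H2].
      * right. apply Fmono; auto.
      * left. apply HP; auto. split; auto.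
    + right. intros x Hx. apply approx_infl; auto.
  - destruct (classic (exists P', C P' /\ subset (F P) P')) as [[P' [HC HS]]|Hn].
    + right. intros x Hx. exists P'; auto.
    + left. intros x [P' [HC HP']]. destruct (H0 P' HC) as [H1|H1]; auto.
      exfalso; apply Hn; eauto.
  - destruct IHapprox as [H1|H1]; [left|right]; intros x Hx.
    + apply H1, H0, Hx.
    + apply H0, H1, Hx.
Qed.

Lemma all_normal : forall P, approx P -> normal P.
Proof.
  induction 1.
  - intros Q HQ [HQP HnPQ]. destruct (lem1 P IHapprox Q HQ) as [H1|H1]; [|contradiction].
    destruct (classic (subset P Q)) as [H2|H2].
    + apply Fmono. exact H1.
    + intros x Hx. apply approx_infl; auto. apply (IHapprox Q HQ); [split; auto|exact Hx].
  - intros Q HQ [HQP HnPQ].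
    apply not_all_ex_not in HnPQ. destruct HnPQ as [x Hx].
    apply imply_to_and in Hx. destruct Hx as [[P [HC HPx]] HQx].
    destruct (lem1 P (H0 P HC) Q HQ) as [H1|H1].
    + intros y Hy. exists P. split; [exact HC|]. apply (H0 P HC Q HQ); [split; [exact H1| intro HPQ; apply HQx, HPQ, HPx] | exact Hy].
    + exfalso. apply HQx, H1. apply approx_infl; auto.
  - intros R HR [HRQ HnQR]. intros x Hx. apply H0. apply (IHapprox R HR).
    + split.
      * intros y Hy. apply H0, HRQ, Hy.
      * intro HPR. apply HnQR. intros y Hy. apply HPR, H0, Hy.
    + exact Hx.
Qed.

Lemma chain : forall P Q, approx P -> approx Q -> subset P Q \/ subset Q P.
Proof.
  intros P Q HP HQ. destruct (lem1 P (all_normal P HP) Q HQ) as [H|H]; [right; auto|left].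
  intros x Hx. apply H, approx_infl; auto.
Qed.

Definition prec (y x : St) := exists Q, approx Q /\ Q y /\ ~ Q x.

Lemma prec_acc : forall P, approx P -> forall x, P x -> Acc prec x.
Proof.
  induction 1; intros x Hx.
  - constructor. intros y [Q [HQ [HQy HQx]]].
    destruct (lem1 P (all_normal P H) Q HQ) as [H1|H1].
    + apply IHapprox, H1, HQy.
    + exfalso; apply HQx, H1, Hx.
  - destruct Hx as [P [HC HP]]. eapply H0; eauto.
  - apply IHapprox, H0, Hx.
Qed.

Lemma prec_wf : well_founded prec.
Proof.
  intros x. constructor. intros y [Q [HQ [HQy _]]]. eapply prec_acc; eauto.
Qed.

Definition lfp (x : St) := forall P, subset (F P) P -> P x.

Lemma approx_lfp : approx lfp.
Proof.
  apply (apE (fun x => exists P, approx P /\ P x)).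
  - apply (apU approx). auto.
  - intros x; split.
    + intros [P [HP HPx]] Pre HPre. eapply approx_below; eauto.
    + intros Hx. apply Hx. intros y Hy. exists (F (fun x => exists P, approx P /\ P x)).
      split; auto. apply apF. apply (apU approx). auto.
Qed.

Lemma lfp_below : forall P, approx P -> subset P lfp.
Proof. intros P HP x Hx Pre HPre. eapply approx_below; eauto. Qed.

Lemma fam_min : forall C : (St -> Prop) -> Prop,
  (forall P Q, approx P -> approx Q -> subset P Q -> C P -> C Q) ->
  forall Q0, approx Q0 -> C Q0 ->
  exists Qm, approx Qm /\ C Qm /\ forall Q, approx Q -> C Q -> subset Qm Q.
Proof.
  intros C HC Q0 HQ0 HCQ0.
  set (M := fun x => exists P, (approx P /\ ~ C P) /\ P x).
  assert (HM : approx M) by (apply apU; intros P [HP _]; exact HP).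
  destruct (classic (C M)) as [HCM|HCM].
  - exists M. split; [exact HM|split; [exact HCM|]].
    intros Q HQ HCQ. destruct (chain M Q HM HQ) as [H1|H1]; [exact H1|].
    destruct (classic (subset M Q)) as [H2|H2]; [exact H2|exfalso].
    apply not_all_ex_not in H2. destruct H2 as [x Hx].
    apply imply_to_and in Hx. destruct Hx as [[P [[HP HnCP] HPx]] HQx].
    destruct (chain P Q HP HQ) as [H3|H3].
    + apply HQx, H3, HPx.
    + apply HnCP. eapply HC; [exact HQ|exact HP|exact H3|exact HCQ].
  - exists (F M). split; [apply apF; exact HM|split].
    + destruct (classic (C (F M))) as [H1|H1]; [exact H1|exfalso].
      assert (HFM : subset (F M) M).
      { intros x Hx. exists (F M). split; [split; [apply apF; exact HM|exact H1]|exact Hx]. }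
      apply HCM. eapply HC; [exact HQ0|exact HM| |exact HCQ0].
      intros x Hx. eapply approx_below; [exact HFM|exact HQ0|exact Hx].
    + intros Q HQ HCQ. destruct (lem1 M (all_normal M HM) Q HQ) as [H1|H1]; [|exact H1].
      exfalso. apply HCM. eapply HC; [exact HQ|exact HM|exact H1|exact HCQ].
Qed.

Lemma lfp_B : forall x, lfp x -> exists B, approx B /\ ~ B x /\ F B x.
Proof.
  intros x Hx.
  set (B := fun y => exists P, (approx P /\ ~ P x) /\ P y).
  assert (HB : approx B) by (apply apU; intros P [HP _]; exact HP).
  exists B. split; [exact HB|split].
  - intros [P [[_ HnP] HP]]. contradiction.
  - destruct (classic (F B x)) as [H|H]; [exact H|exfalso].
    assert (HFB : subset (F B) B).
    { intros y Hy. exists (F B). split; [split; [apply apF; exact HB|exact H]|exact Hy]. }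
    destruct (Hx B HFB) as [P [[_ HnP] HP]]. contradiction.
Qed.

End Approx.

Lemma subtree_app : forall {St A} (t : tree St A) p q,
  subtree t (p ++ q) = match subtree t p with Some t' => subtree t' q | None => None end.
Proof.
  intros St A t p. revert t. induction p as [|i p IH]; intros t q; simpl; auto.
  destruct t as [s r ch]. destruct (nth_error ch i); auto.
Qed.

Lemma rule_at_eq : forall {St A} (t : tree St A) p s r ch r',
  subtree t p = Some (Node s r ch) -> rule_at t p r' -> r = Some r'.
Proof. intros St A t p s r ch r' H [s' [ch' H']]. rewrite H in H'. congruence. Qed.

Lemma seq_at_eq : forall {St A} (t : tree St A) p s r ch s',
  subtree t p = Some (Node s r ch) -> seq_at t p s' -> s' = s.
Proof. intros St A t p s r ch s' H [r' [ch' H']]. rewrite H in H'. congruence. Qed.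

Lemma strict_anc_irr : forall p, ~ strict_anc p p.
Proof.
  intros p [r [Hr E]]. apply (f_equal (@length nat)) in E. rewrite length_app in E.
  destruct r; [congruence|simpl in E; lia].
Qed.

Lemma cl_cond_of : forall {St A} (t : tree St A) m n, companion_leaf t m n -> cl_cond t m n.
Proof. intros St A t m n. unfold companion_leaf. destruct (length n); simpl; tauto. Qed.

Section Build.
Context {St A : Type} (tr : St -> A -> St -> Prop) (V : var -> St -> Prop).
Variables (U Z : var) (Phi sPhi : form A) (S : St -> Prop) (Fam : (St -> Prop) -> Prop).
Hypothesis HPhi_ff : fixpoint_free Phi.
Hypothesis HPhi_pnf : pnf Phi.
Hypothesis HPhi_par : par Z true Phi.
Hypothesis HU : ~ occurs_in U sPhi.
Hypothesis HsPhi : sPhi = FNu Z Phi \/ sPhi = FMu Z Phi.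
Hypothesis famS : Fam S.
Hypothesis fam_chain : forall P Q, Fam P -> Fam Q -> subset P Q \/ subset Q P.
Hypothesis fam_min' : forall C : (St -> Prop) -> Prop,
  (forall P Q, Fam P -> Fam Q -> subset P Q -> C P -> C Q) -> C S ->
  exists Qm, Fam Qm /\ C Qm /\ forall Q, Fam Q -> C Q -> subset Qm Q.
Hypothesis HSfix : subset S (sem tr (upd V U S) (subst Z U Phi)).

Definition D : deflist A := [(U, sPhi)].
Definition semU (h : form A) (Q : St -> Prop) := sem tr (upd V U Q) h.
Definition good (h : form A) := fixpoint_free h /\ pnf h /\ par U true h.
Definition hPhi := subst Z U Phi.

Lemma HU_Phi : ~ occurs_in U Phi.
Proof. intro H. apply HU. destruct HsPhi as [E|E]; rewrite E; simpl; auto. Qed.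

Lemma good_hPhi : good hPhi.
Proof.
  unfold good, hPhi. split; [apply subst_ff; auto|split; [apply subst_pnf; auto|]].
  apply subst_par; auto. apply HU_Phi.
Qed.

Lemma semU_mono : forall h P Q, good h -> subset P Q -> subset (semU h P) (semU h Q).
Proof. intros h P Q [H1 [H2 H3]] HPQ. unfold semU. apply sem_mono; auto. Qed.

Definition sel (h h1 : form A) (x : St) := forall Q, Fam Q -> semU h Q x -> semU h1 Q x.

Lemma sel_not : forall h1 h2 x, good h1 -> good h2 -> ~ sel (FOr h1 h2) h1 x ->
  forall Q, Fam Q -> semU (FOr h1 h2) Q x -> semU h2 Q x.
Proof.
  intros h1 h2 x G1 G2 Hn Q FQ HQ.
  unfold sel in Hn. apply not_all_ex_not in Hn. destruct Hn as [Q0 Hn].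
  apply imply_to_and in Hn. destruct Hn as [FQ0 Hn].
  apply imply_to_and in Hn. destruct Hn as [H0 Hn1].
  assert (H02 : semU h2 Q0 x) by (destruct H0; [contradiction|auto]).
  destruct (fam_chain Q0 Q FQ0 FQ) as [H1|H1].
  - eapply semU_mono; eauto.
  - destruct HQ as [HQ|HQ]; auto. exfalso. apply Hn1. eapply semU_mono; eauto.
Qed.

Lemma ch_ex : forall K h' z, exists y, (good h' /\ semU (FDia K h') S z) ->
  step tr K z y /\ forall Q, Fam Q -> semU (FDia K h') Q z -> semU h' Q y.
Proof.
  intros K h' z. destruct (classic (good h' /\ semU (FDia K h') S z)) as [[G HS]|Hn].
  - destruct (fam_min' (fun Q => semU (FDia K h') Q z)) as [Qm [FQm [HQm Hmin]]].
    + intros P Q FP FQ HPQ HP. apply (semU_mono (FDia K h') P Q); auto.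
    + exact HS.
    + destruct HQm as [y [Hy1 Hy2]]. exists y. intros _. split; auto.
      intros Q FQ HQ. eapply semU_mono; eauto.
  - exists z. intro H. contradiction.
Qed.

Definition chf K h' z := proj1_sig (constructive_indefinite_description _ (ch_ex K h' z)).

Lemma chf_spec : forall K h' z, good h' -> semU (FDia K h') S z ->
  step tr K z (chf K h' z) /\ forall Q, Fam Q -> semU (FDia K h') Q z -> semU h' Q (chf K h' z).
Proof.
  intros K h' z G H. unfold chf.
  destruct (constructive_indefinite_description _ (ch_ex K h' z)) as [y Hy]. simpl. auto.
Qed.

Fixpoint build (h : form A) (T : St -> Prop) : tree St A :=
  match h with
  | FAnd h1 h2 => Node (Seq T D h) (Some RAnd) [build h1 T; build h2 T]
  | FOr h1 h2 => Node (Seq T D h) (Some ROr)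
       [build h1 (fun x => T x /\ sel h h1 x); build h2 (fun x => T x /\ ~ sel h h1 x)]
  | FBox K h' => Node (Seq T D h) (Some RBox) [build h' (fun y => exists x, T x /\ step tr K x y)]
  | FDia K h' => Node (Seq T D h) (Some (RDia (chf K h')))
       [build h' (fun y => exists x, T x /\ y = chf K h' x)]
  | _ => Node (Seq T D h) None []
  end.

Lemma build_shape : forall h T, exists r ch, build h T = Node (Seq T D h) r ch.
Proof. destruct h; intros; simpl; eauto. Qed.

Lemma label_build : forall h T, label (build h T) = Seq T D h.
Proof. intros h T. destruct (build_shape h T) as [r [ch E]]. rewrite E. reflexivity. Qed.

Definition Inv (s : sequent St A) (r : option (rule_app St)) (chl : list (tree St A)) : Prop :=
  sdefs s = D /\ good (sform s) /\ subset (sset s) (semU (sform s) S) /\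
  match sform s with
  | FAnd h1 h2 => r = Some RAnd /\ map label chl = [Seq (sset s) D h1; Seq (sset s) D h2]
  | FOr h1 h2 => r = Some ROr /\ map label chl =
      [Seq (fun x => sset s x /\ sel (sform s) h1 x) D h1; Seq (fun x => sset s x /\ ~ sel (sform s) h1 x) D h2]
  | FBox K h' => r = Some RBox /\ map label chl = [Seq (fun y => exists x, sset s x /\ step tr K x y) D h']
  | FDia K h' => r = Some (RDia (chf K h')) /\
      map label chl = [Seq (fun y => exists x, sset s x /\ y = chf K h' x) D h']
  | _ => r = None /\ chl = []
  end.

Lemma good_and : forall h1 h2, good (FAnd h1 h2) -> good h1 /\ good h2.
Proof. unfold good; simpl; tauto. Qed.
Lemma good_or : forall h1 h2, good (FOr h1 h2) -> good h1 /\ good h2.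
Proof. unfold good; simpl; tauto. Qed.
Lemma good_box : forall K h, good (FBox K h) -> good h.
Proof. unfold good; simpl; tauto. Qed.
Lemma good_dia : forall K h, good (FDia K h) -> good h.
Proof. unfold good; simpl; tauto. Qed.

Lemma build_inv : forall h T, good h -> subset T (semU h S) ->
  forall q s r chl, subtree (build h T) q = Some (Node s r chl) -> Inv s r chl.
Proof.
  induction h; intros T Hg HT q s r chl Hq; destruct q as [|i q]; simpl in Hq;
    try (inversion Hq; subst; clear Hq; unfold Inv; simpl;
         repeat rewrite label_build; refine (conj eq_refl (conj Hg (conj HT _))); simpl; auto; fail).
  - destruct i; discriminate.
  - destruct i; discriminate.
  - destruct (good_and _ _ Hg) as [G1 G2].
    destruct i as [|[|i]]; simpl in Hq; try (destruct i; discriminate).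
    + eapply IHh1; eauto. intros x Hx. apply (HT x Hx).
    + eapply IHh2; eauto. intros x Hx. apply (HT x Hx).
  - destruct (good_or _ _ Hg) as [G1 G2].
    destruct i as [|[|i]]; simpl in Hq; try (destruct i; discriminate).
    + eapply IHh1; eauto. intros x [Hx Hs]. apply Hs; auto.
    + eapply IHh2; eauto. intros x [Hx Hs]. exact (sel_not h1 h2 x G1 G2 Hs S famS (HT x Hx)).
  - pose proof (good_box _ _ Hg) as G.
    destruct i as [|i]; simpl in Hq; try (destruct i; discriminate).
    eapply IHh; eauto. intros y [x [Hx Hs]]. apply (HT x Hx). exact Hs.
  - pose proof (good_dia _ _ Hg) as G.
    destruct i as [|i]; simpl in Hq; try (destruct i; discriminate).
    eapply IHh; eauto. intros y [x [Hx ->]].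
    apply (chf_spec _ h x G (HT x Hx)); auto.
  - destruct i; discriminate.
  - destruct i; discriminate.
Qed.

Definition t0 : tree St A :=
  Node (Seq S [] sPhi) (Some RFix) [Node (Seq S D (FVar U)) (Some RUn) [build hPhi S]].

Lemma t0_nodes : forall p s r chl, subtree t0 p = Some (Node s r chl) ->
  (p = [] /\ s = Seq S [] sPhi /\ r = Some RFix /\ chl = [Node (Seq S D (FVar U)) (Some RUn) [build hPhi S]]) \/
  (p = [0] /\ s = Seq S D (FVar U) /\ r = Some RUn /\ chl = [build hPhi S]) \/
  (exists q, p = 0 :: 0 :: q /\ subtree (build hPhi S) q = Some (Node s r chl)).
Proof.
  intros p s r chl H. destruct p as [|[|i] p]; simpl in H.
  - left. inversion H; subst; auto.
  - destruct p as [|[|j] p]; simpl in H.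
    + right; left. inversion H; subst; auto.
    + right; right. eauto.
    + destruct j; discriminate.
  - destruct i; discriminate.
Qed.

Lemma D_dom : forall X, dom D X <-> X = U.
Proof. intros X. unfold dom, D. simpl. split; [intros [H|[]]; auto|intros ->; auto]. Qed.

Lemma D_deflist : is_deflist D.
Proof.
  split; [|split].
  - simpl. constructor; [simpl; tauto|constructor].
  - intros U' f HU' Hf. apply D_dom in HU'. subst U'. simpl in Hf. destruct Hf as [<-|[]]. intro Hb. apply HU, bound_occ; auto.
  - intros i j Ui fi Uj fj Hi Hj _.
    destruct i as [|i]; simpl in Hi; [|destruct i; discriminate].
    destruct j as [|j]; simpl in Hj; [|destruct j; discriminate].
    inversion Hi; inversion Hj; subst. intro Hf. apply HU, free_occ; auto.
Qed.

Lemma pnf_sPhi : pnf sPhi.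
Proof. destruct HsPhi as [E|E]; rewrite E; simpl; auto. Qed.

Lemma region_leaf : forall q s, subtree t0 (0 :: 0 :: q) = Some (Node s None []) ->
  Inv s None [] -> terminal tr t0 (0 :: 0 :: q) s.
Proof.
  intros q s Hq [Hd [[Gf [Gp Gpar]] [Hsub Hm]]].
  destruct (sform s) eqn:E; try (destruct Hm as [Hm1 Hm2]; discriminate).
  - destruct (Nat.eq_dec v U) as [->|Hne].
    + right; right. exists U. split; auto. split; [rewrite Hd; apply D_dom; auto|].
      exists [0], (Seq S D (FVar U)). split; [exists (0 :: q); split; [discriminate|reflexivity]|].
      split; [exists (Some RUn), [build hPhi S]; reflexivity|]. split; auto.
      intros x Hx. specialize (Hsub x Hx). unfold semU in Hsub. simpl in Hsub.
      rewrite upd_eq in Hsub. auto.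
    + left. exists v. split; auto. rewrite Hd, D_dom. auto.
  - destruct Gp as [X ->]. simpl in Gpar. left. exists X. split; auto.
    rewrite Hd, D_dom. intro E'. subst. specialize (Gpar eq_refl). discriminate.
  - contradiction.
  - contradiction.
Qed.

Lemma t0_tableau : is_tableau tr t0.
Proof.
  split; [reflexivity|]. intros p _ s r chl H.
  destruct (t0_nodes p s r chl H) as [(-> & -> & -> & ->)|[(-> & -> & -> & ->)|[q [-> Hq]]]].
  - split.
    + split; [|split].
      * split; [constructor|split]; [intros U' f []| intros i j Ui fi Uj fj Hi; destruct i; discriminate].
      * apply pnf_sPhi.
      * intros U' [].
    + exists RFix. split; auto. simpl. split; [destruct HsPhi as [E|E]; eauto|].
      split; [|intros x; tauto]. exists U. split; [|split; reflexivity].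
      split; [intros []|split; [exact HU|intros f []]].
  - split.
    + split; [apply D_deflist|split; [simpl; auto|]].
      intros U' HU'. apply D_dom in HU'. subst. simpl. split; [intros _; reflexivity|auto].
    + exists RUn. split; auto. simpl. rewrite label_build. simpl.
      split; [|split; [auto|intros x; tauto]].
      exists U, Z, Phi. split; auto. unfold D. simpl. rewrite Nat.eqb_refl.
      split; [destruct HsPhi as [E|E]; rewrite E; auto|reflexivity].
  - pose proof (build_inv hPhi S good_hPhi HSfix q s r chl Hq) as HI.
    pose proof HI as [Hd [[Gf [Gp Gpar]] [Hsub Hm]]].
    split.
    + split; [rewrite Hd; apply D_deflist|split; auto].
      intros U' HU'. rewrite Hd in HU'. apply D_dom in HU'. subst. split; auto. apply ff_nobound; auto.
    + destruct (sform s) eqn:E.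
      * destruct Hm as [-> ->]. split; auto. apply region_leaf; auto.
      * destruct Hm as [-> ->]. split; auto. apply region_leaf; auto.
      * destruct Hm as [-> Hl]. destruct chl as [|c chl]; [discriminate|].
        exists RAnd. split; auto. rewrite Hl. simpl. rewrite E. repeat split; auto; intros x; tauto.
      * destruct Hm as [-> Hl]. destruct chl as [|c chl]; [discriminate|].
        exists ROr. split; auto. rewrite Hl. simpl. rewrite E. repeat split; auto.
        all: intros; destruct (classic (sel (FOr f1 f2) f1 x)); tauto.
      * destruct Hm as [-> Hl]. destruct chl as [|c chl]; [discriminate|].
        exists RBox. split; auto. rewrite Hl. simpl. split; auto. exists P. split; auto. intros x; tauto.
      * destruct Hm as [-> Hl]. destruct chl as [|c chl]; [discriminate|].
        exists (RDia (chf P f)). split; auto. rewrite Hl. simpl. split; [|split; [intros x; tauto|auto]].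
        exists P. split; auto. intros x Hx. apply chf_spec.
        -- unfold good in *; simpl in *; tauto.
        -- apply Hsub; auto.
      * contradiction.
      * contradiction.
Qed.

Lemma region_inv : forall q s r chl, subtree t0 (0 :: 0 :: q) = Some (Node s r chl) -> Inv s r chl.
Proof. intros q s r chl H. simpl in H. eapply build_inv; eauto. apply good_hPhi. Qed.

Lemma t0_comp_node : forall m, companion_node t0 m -> m = [0].
Proof.
  intros m [s [ch H]].
  destruct (t0_nodes m s (Some RUn) ch H) as [(_ & _ & E & _)|[(-> & _)|[q [-> Hq]]]]; auto; try discriminate.
  pose proof (build_inv hPhi S good_hPhi HSfix q s _ ch Hq) as [_ [_ [_ Hm]]].
  destruct (sform s); destruct Hm; discriminate.
Qed.

Lemma t0_leaves : forall n, is_leaf t0 n -> exists s, seq_at t0 n s /\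
  ((exists X, sform s = FVar X /\ ~ dom (sdefs s) X /\ subset (sset s) (V X)) \/
   (exists X, sform s = FNeg (FVar X) /\ ~ dom (sdefs s) X /\ forall x, sset s x -> ~ V X x) \/
   (sform s = FVar U /\ sdefs s = D /\ companion_leaf t0 [0] n)).
Proof.
  intros n Hl. pose proof Hl as [s [r H]]. exists s. split; [exists r, []; exact H|].
  destruct (t0_nodes n s r [] H) as [(_ & _ & _ & E)|[(_ & _ & _ & E)|[q [-> Hq]]]]; try discriminate.
  pose proof (build_inv hPhi S good_hPhi HSfix q s r [] Hq) as [Hd [[Gf [Gp Gpar]] [Hsub Hm]]].
  destruct (sform s) eqn:E; try (destruct Hm as [_ Hm]; discriminate); try contradiction.
  - destruct (Nat.eq_dec v U) as [->|Hne].
    + right; right. split; auto. split; auto.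
      unfold companion_leaf. simpl. split.
      * split; [exact Hl|split; [exists (0 :: q); split; [discriminate|reflexivity]|]].
        exists (Seq S D (FVar U)), s. split; [exists (Some RUn), [build hPhi S]; reflexivity|].
        split; [exists r, []; exact H|]. split; [simpl; auto|].
        intros x Hx. specialize (Hsub x Hx). unfold semU in Hsub. simpl in Hsub. rewrite upd_eq in Hsub. auto.
      * intros [m' [Hc [Ha _]]]. apply t0_comp_node in Hc. subst. apply (strict_anc_irr [0]); auto.
    + left. exists v. split; auto. split; [rewrite Hd, D_dom; auto|].
      intros x Hx. specialize (Hsub x Hx). unfold semU in Hsub. simpl in Hsub. rewrite upd_neq in Hsub; auto.
  - destruct Gp as [X ->]. simpl in Gpar.
    assert (HX : X <> U) by (intro E'; subst; specialize (Gpar eq_refl); discriminate).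
    right; left. exists X. split; auto. split; [rewrite Hd, D_dom; auto|].
    intros x Hx. specialize (Hsub x Hx). unfold semU in Hsub. simpl in Hsub. rewrite upd_neq in Hsub; auto.
Qed.

Lemma ld_inv : forall n' n y x, lessdot tr t0 n' n y x ->
  forall q sn, n = 0 :: 0 :: q -> seq_at t0 n sn -> forall Q, Fam Q -> semU (sform sn) Q x ->
  exists q' sn', n' = 0 :: 0 :: q' /\ seq_at t0 n' sn' /\ semU (sform sn') Q y.
Proof.
  induction 1 as [n s Hn | n' m n s' s'' s Hld IH Hlt].
  - intros q sn -> Hsn Q FQ Hx. exists q, sn. auto.
  - intros q sn -> [r [chl Hsn]] Q FQ Hx.
    destruct Hlt as [[i Hm] [Hnode [[s0 [Hs0 Hs0x]] [Hin Hcase]]]].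
    subst m.
    pose proof (region_inv q sn r chl Hsn) as [Hd [G [Hsub Hmatch]]].
    destruct Hs0 as [r0 [ch0 Hs0]].
    assert (Hs0' := Hs0). rewrite subtree_app, Hsn in Hs0'.
    assert (Hn : nth_error chl i = Some (Node s0 r0 ch0)).
    { simpl in Hs0'. destruct (nth_error chl i); congruence. }
    assert (Hlab : nth_error (map label chl) i = Some s0) by (rewrite (map_nth_error label i chl Hn); reflexivity).
    assert (HsnS : sset sn s).
    { destruct Hin as [sx [Hsx Hx']]. rewrite (seq_at_eq _ _ _ _ _ _ Hsn Hsx) in Hx'. exact Hx'. }
    assert (HIH : semU (sform s0) Q s'' ->
       exists q' sn', n' = 0 :: 0 :: q' /\ seq_at t0 n' sn' /\ semU (sform sn') Q s').
    { intro Hs''. apply (IH (q ++ [i]) s0); auto. exists r0, ch0. exact Hs0. }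
    apply HIH. clear HIH IH Hld.
    revert Hmatch Hsub G Hx; destruct (sform sn) eqn:E; intros Hmatch Hsub G Hx;
      try (destruct Hmatch as [_ ->]; destruct i; discriminate); try (exfalso; destruct G as [Gf _]; exact Gf).
    + destruct Hmatch as [Hr Hl]. rewrite Hl in Hlab.
      destruct Hcase as [[Hb _]|[[f [Hd' _]]|[_ [_ ->]]]];
        [apply (rule_at_eq _ _ _ _ _ _ Hsn) in Hb; congruence
        |apply (rule_at_eq _ _ _ _ _ _ Hsn) in Hd'; congruence|].
      destruct i as [|[|i]]; simpl in Hlab; [| |destruct i; discriminate];
        inversion Hlab; subst s0; simpl; destruct Hx; auto.
    + destruct Hmatch as [Hr Hl]. rewrite Hl in Hlab.
      destruct Hcase as [[Hb _]|[[f [Hd' _]]|[_ [_ ->]]]];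
        [apply (rule_at_eq _ _ _ _ _ _ Hsn) in Hb; congruence
        |apply (rule_at_eq _ _ _ _ _ _ Hsn) in Hd'; congruence|].
      destruct (good_or _ _ G) as [G1 G2].
      destruct i as [|[|i]]; simpl in Hlab; [| |destruct i; discriminate];
        inversion Hlab; subst s0; simpl in Hs0x |- *; destruct Hs0x as [_ Hsel].
      * apply Hsel; auto.
      * exact (sel_not f1 f2 s G1 G2 Hsel Q FQ Hx).
    + destruct Hmatch as [Hr Hl]. rewrite Hl in Hlab.
      destruct i as [|i]; simpl in Hlab; [|destruct i; discriminate].
      inversion Hlab; subst s0; simpl.
      destruct Hcase as [[Hb [sn' [K [g [Hsn' [Ef Hst]]]]]]|[[f0 [Hd' _]]|[Hnb _]]].
      * rewrite (seq_at_eq _ _ _ _ _ _ Hsn Hsn') in Ef. rewrite E in Ef. inversion Ef; subst.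
        apply Hx; auto.
      * apply (rule_at_eq _ _ _ _ _ _ Hsn) in Hd'; congruence.
      * exfalso. apply Hnb. subst r. exists sn, chl. exact Hsn.
    + destruct Hmatch as [Hr Hl]. rewrite Hl in Hlab.
      destruct i as [|i]; simpl in Hlab; [|destruct i; discriminate].
      inversion Hlab; subst s0; simpl.
      destruct Hcase as [[Hb _]|[[f0 [Hd' ->]]|[_ [Hnd _]]]].
      * apply (rule_at_eq _ _ _ _ _ _ Hsn) in Hb; congruence.
      * apply (rule_at_eq _ _ _ _ _ _ Hsn) in Hd'. rewrite Hr in Hd'. inversion Hd'; subst.
        refine (proj2 (chf_spec P f s _ _) Q FQ Hx).
        -- unfold good in *; simpl in *; tauto.
        -- apply Hsub; auto.
      * exfalso. apply Hnd. exists (chf P f). subst r. exists sn, chl. exact Hsn.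
Qed.

Lemma subtree_t0_0 : subtree t0 [0] = Some (Node (Seq S D (FVar U)) (Some RUn) [build hPhi S]).
Proof. reflexivity. Qed.

Lemma subm_inv : forall y x, subm tr t0 [0] y x -> S x /\ forall Q, Fam Q -> semU hPhi Q x -> Q y.
Proof.
  intros y x H. inversion H as [m m' s' s Hcl Hin Hsub]; subst.
  destruct (cl_cond_of _ _ _ Hcl) as [Hleaf [Hanc [sm [sn [Hsm [Hsn [Ef Hss]]]]]]].
  rewrite (seq_at_eq _ _ _ _ _ _ subtree_t0_0 Hsm) in Ef. simpl in Ef.
  inversion Hsub as [n' n s1 s2 _ _ Hld|n' n s1 s2 m0 u u' _ _ Hc Hne _ _ _ _ _ _ ]; subst.
  2:{ apply t0_comp_node in Hc. contradiction. }
  inversion Hld as [n0 s0 Hn0|n'0 mm n0 s'0 s'' s0 Hld' Hlt]; subst.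
  { exfalso. apply (strict_anc_irr [0]); auto. }
  destruct Hlt as [[i ->] [Hnode [_ [HinX Hcase]]]].
  destruct i as [|i]; [|exfalso; apply Hnode; destruct i; reflexivity].
  assert (Hsx : s'' = x).
  { destruct Hcase as [[Hb _]|[[f [Hd' _]]|[_ [_ E]]]]; auto.
    - apply (rule_at_eq _ _ _ _ _ _ subtree_t0_0) in Hb; discriminate.
    - apply (rule_at_eq _ _ _ _ _ _ subtree_t0_0) in Hd'; discriminate. }
  subst s''.
  assert (HSx : S x).
  { destruct HinX as [sx [Hsx Hx]]. rewrite (seq_at_eq _ _ _ _ _ _ subtree_t0_0 Hsx) in Hx. exact Hx. }
  split; auto. intros Q FQ HQ.
  assert (Hs00 : seq_at t0 [0; 0] (Seq S D hPhi)).
  { destruct (build_shape hPhi S) as [r [ch E]]. exists r, ch. simpl. rewrite E. reflexivity. }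
  destruct (ld_inv _ _ _ _ Hld' [] _ eq_refl Hs00 Q FQ HQ) as [q' [sn' [Hm' [Hsn' Hy]]]].
  destruct Hsn as [r1 [ch1 Hsn]].
  rewrite (seq_at_eq _ _ _ _ _ _ Hsn Hsn') in Hy. rewrite Ef in Hy. unfold semU in Hy. simpl in Hy.
  rewrite upd_eq in Hy. exact Hy.
Qed.

End Build.

Lemma assemble : forall {St A : Type} (tr : St -> A -> St -> Prop) (V : var -> St -> Prop)
  (U Z : var) (Phi sPhi : form A) (S : St -> Prop) (Fam : (St -> Prop) -> Prop)
  (H1 : fixpoint_free Phi) (H2 : pnf Phi) (H3 : par Z true Phi) (H4 : ~ occurs_in U sPhi)
  (H5 : sPhi = FNu Z Phi \/ sPhi = FMu Z Phi) (H6 : Fam S)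
  (H7 : forall P Q, Fam P -> Fam Q -> subset P Q \/ subset Q P) fam_min'
  (H8 : subset S (sem tr (upd V U S) (subst Z U Phi))),
  (sPhi = FNu Z Phi \/ (sPhi = FMu Z Phi /\
     well_founded (subm tr (t0 tr V U Z Phi sPhi S Fam fam_min') [0]))) ->
  successful tr V (t0 tr V U Z Phi sPhi S Fam fam_min').
Proof.
  intros St A tr V U Z Phi sPhi S Fam H1 H2 H3 H4 H5 H6 H7 fm H8 Hc n Hl.
  destruct (t0_leaves tr V U Z Phi sPhi S Fam H1 H2 H3 H4 H5 H6 H7 fm H8 n Hl)
    as [s [Hs [HA|[HB|[HU [Hd Hcl]]]]]].
  - exists s. split; auto.
  - exists s. split; auto.
  - exists s. split; auto. right; right.
    assert (Hlk : lookup (sdefs s) U = Some sPhi).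
    { rewrite Hd. unfold D. simpl. rewrite Nat.eqb_refl. reflexivity. }
    destruct Hc as [E|[E Hwf]]; rewrite E in Hlk.
    + left. exists U, Z, Phi. auto.
    + right. exists U, Z, Phi. split; auto. split; auto. exists [0]. split; [|split; auto].
      do 2 eexists. reflexivity.
Qed.

Theorem corollary12 :
  forall (St A : Type) (tr : St -> A -> St -> Prop) (V : var -> St -> Prop)
         (Z : var) (nu : bool) (Phi : form A),
    fixpoint_free Phi -> pnf Phi ->
    let sPhi := if nu then FNu Z Phi else FMu Z Phi in
    wellformed sPhi ->
    exists t : tree St A,
      is_tableau tr t /\
      seteq (sset (label t)) (sem tr V sPhi) /\
      sdefs (label t) = [] /\
      sform (label t) = sPhi /\
      successful tr V t.
Proof.
  intros St A tr V Z nu Phi Hff Hpnf sPhi Hwf.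
  set (U := S (maxv sPhi)).
  assert (HU : ~ occurs_in U sPhi) by (intro H; apply occ_maxv in H; unfold U in H; lia).
  assert (Hpar : par Z true Phi) by (unfold sPhi in Hwf; destruct nu; simpl in Hwf; tauto).
  assert (HUPhi : ~ occurs_in U Phi) by (intro H; apply HU; unfold sPhi; destruct nu; simpl; auto).
  set (h := subst Z U Phi).
  assert (Gf : fixpoint_free h) by (apply subst_ff; auto).
  assert (Gp : pnf h) by (apply subst_pnf; auto).
  assert (Gpar : par U true h) by (apply subst_par; auto).
  assert (Fmono : forall P Q, subset P Q -> subset (sem tr (upd V U P) h) (sem tr (upd V U Q) h))
    by (intros; apply sem_mono; auto).
  assert (Hsub : forall P x, sem tr (upd V U P) h x <-> sem tr (upd V Z P) Phi x)
    by (intros; apply subst_sem; auto).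
  destruct nu.
  -
    set (G := sem tr V (FNu Z Phi)).
    set (Fam := fun Q => subset Q G /\ subset G Q).
    assert (H5 : sPhi = FNu Z Phi \/ sPhi = FMu Z Phi) by (left; reflexivity).
    assert (H6 : Fam G) by (split; intros x Hx; auto).
    assert (H7 : forall P Q, Fam P -> Fam Q -> subset P Q \/ subset Q P).
    { intros P Q [HP1 HP2] [HQ1 HQ2]. left. intros x Hx. auto. }
    assert (fm : forall C : (St -> Prop) -> Prop,
      (forall P Q, Fam P -> Fam Q -> subset P Q -> C P -> C Q) -> C G ->
      exists Qm, Fam Qm /\ C Qm /\ forall Q, Fam Q -> C Q -> subset Qm Q).
    { intros C _ HC. exists G. split; auto. split; auto. intros Q [_ HQ] _. exact HQ. }
    assert (H8 : subset G (sem tr (upd V U G) (subst Z U Phi))).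
    { intros x [S' [HS' Hx]]. apply (Fmono S'). - intros y Hy. exists S'. auto.
      - apply Hsub. apply HS'. exact Hx. }
    exists (t0 tr V U Z Phi sPhi G Fam fm).
    split; [exact (t0_tableau tr V U Z Phi sPhi G Fam Hff Hpnf Hpar HU H5 H6 H7 fm H8)|].
    split; [intros x; simpl; tauto|]. split; [reflexivity|]. split; [reflexivity|].
    apply assemble; auto.
  -
    set (F := fun P => sem tr (upd V U P) h).
    set (L := sem tr V (FMu Z Phi)).
    assert (HL : forall x, L x <-> lfp St F x).
    { intros x. unfold L, lfp, F. simpl. split; intros H P HP; apply H; intros y Hy; apply HP; apply Hsub; auto. }
    set (Fam := approx St F).
    assert (H5 : sPhi = FNu Z Phi \/ sPhi = FMu Z Phi) by (right; reflexivity).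
    assert (H6 : Fam L) by (apply (apE St F (lfp St F)); [apply approx_lfp; auto|intros x; rewrite HL; tauto]).
    assert (H7 : forall P Q, Fam P -> Fam Q -> subset P Q \/ subset Q P) by (intros P Q HP HQ; exact (chain St F Fmono P Q HP HQ)).
    assert (fm : forall C : (St -> Prop) -> Prop,
      (forall P Q, Fam P -> Fam Q -> subset P Q -> C P -> C Q) -> C L ->
      exists Qm, Fam Qm /\ C Qm /\ forall Q, Fam Q -> C Q -> subset Qm Q).
    { intros C HC HCL. apply (fam_min St F Fmono C HC L H6 HCL). }
    assert (H8 : subset L (sem tr (upd V U L) (subst Z U Phi))).
    { apply (approx_infl St F Fmono L H6). }
    exists (t0 tr V U Z Phi sPhi L Fam fm).
    split; [exact (t0_tableau tr V U Z Phi sPhi L Fam Hff Hpnf Hpar HU H5 H6 H7 fm H8)|].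
    split; [intros x; simpl; tauto|]. split; [reflexivity|]. split; [reflexivity|].
    apply assemble; auto. right. split; [reflexivity|].
    intros x. pose proof (prec_wf St F Fmono x) as Hacc. induction Hacc as [x _ IH].
    constructor. intros y Hy.
    destruct (subm_inv tr V U Z Phi sPhi L Fam Hff Hpnf Hpar HU H5 H6 H7 fm H8 y x Hy) as [HLx HQ].
    apply IH. destruct (lfp_B St F x (proj1 (HL x) HLx)) as [B [HB [HBx HFB]]].
    exists B. split; [exact HB|split; [apply HQ; auto|exact HBx]].
Qed.
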